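(* For every cocycle $A=(A_1,\dots,A_k)\in\mathrm{SL}_2(\mathbb{R})^k$ the following dichotomy holds: $A$ is diagonalizable, or else $A$ or $A^{-1}$ is quasi-irreducible.
   Context: $\mathrm{SL}_2(\mathbb{R})$ denotes real $2\times2$ matrices with determinant $\pm1$. Let $p=(p_1,\dots,p_k)$ be a probability vector with positive entries, $X=\Sigma^{\mathbb{Z}}$ ($\Sigma=\{1,\dots,k\}$) with $\mathbb{P}=p^{\mathbb{Z}}$ and shift $T$; a cocycle $A$ acts by $A(x)=A_{x_0}$ with iterates $A^{(n)}(x)=A_{x_{n-1}}\cdots A_{x_0}$, and $L(A)\ge0$ is the a.s. limit of $\frac1n\log\|A^{(n)}(x)\|$. The inverse cocycle is $A^{-1}=(A_1^{-1},\dots,A_k^{-1})$ (its iterates are $A^{(n)}(T^{-n}x)^{-1}$), and $L(A^{-1})=L(A)$. If a line $\ell\subset\mathbb{R}^2$ is invariant under all $A_j$, write $A_jv=\lambda_jv$ for $v\in\ell$ and set $L(A|_\ell)=\sum_jp_j\log|\lambda_j|$. $A$ is quasi-irreducible if there is no line $\ell$ invariant under all $A_j$ with $L(A|_\ell)<L(A)$. $A$ is diagonalizable if there exist two transversal lines each invariant under all $A_j$. *)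

(* Defs.v *)
From HB Require Import structures.
From mathcomp Require Import all_boot all_order all_algebra.
From mathcomp Require Import all_classical all_reals all_analysis.
Set Implicit Arguments. Unset Strict Implicit. Unset Printing Implicit Defensive.
Import Order.TTheory GRing.Theory Num.Theory numFieldNormedType.Exports.
Local Open Scope ring_scope.

(* A cocycle over the full shift on k symbols: a k-tuple of 2x2 real matrices. *)

(* Frobenius (Euclidean) norm of a 2x2 matrix; the Lyapunov exponent does not
   depend on the choice of norm. *)
Definition frob_norm (R : realType) (M : 'M[R]_2) : R :=
  Num.sqrt (\sum_(i < 2) \sum_(j < 2) M i j ^+ 2).

(* n-th iterate along a word w = (x_0,...,x_{n-1}):
   A^(n)(x) = A_{x_{n-1}} ... A_{x_0}. *)
Definition iterate (R : realType) (k n : nat) (A : 'I_k -> 'M[R]_2)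
    (w : {ffun 'I_n -> 'I_k}) : 'M[R]_2 :=
  \prod_(i < n) A (w (rev_ord i)).

(* Probability of the cylinder [x_0..x_{n-1} = w] under the Bernoulli measure p^Z. *)
Definition word_prob (R : realType) (k n : nat) (p : 'I_k -> R)
    (w : {ffun 'I_n -> 'I_k}) : R :=
  \prod_(i < n) p (w i).

(* E[ log ||A^(n)(x)|| ] under p^Z (depends only on x_0..x_{n-1}). *)
Definition exp_log_norm (R : realType) (k : nat) (p : 'I_k -> R)
    (A : 'I_k -> 'M[R]_2) (n : nat) : R :=
  \sum_(w : {ffun 'I_n -> 'I_k}) word_prob p w * ln (frob_norm (iterate A w)).

(* Lyapunov exponent L(A) = lim_n (1/n) E log ||A^(n)||
   (= the a.s. limit of (1/n) log ||A^(n)(x)||, by Furstenberg-Kesten). *)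
Definition lyap (R : realType) (k : nat) (p : 'I_k -> R)
    (A : 'I_k -> 'M[R]_2) : R :=
  limn ((fun n : nat => exp_log_norm p A n.+1 / n.+1%:R) : R^nat).

Definition SL2pm (R : realType) (M : 'M[R]_2) : Prop :=
  \det M = 1 \/ \det M = -1.

Definition pos_prob_vec (R : realType) (k : nat) (p : 'I_k -> R) : Prop :=
  (forall j, 0 < p j) /\ \sum_(j < k) p j = 1.

Definition inv_line (R : realType) (k : nat) (A : 'I_k -> 'M[R]_2)
    (v : 'cV[R]_2) (lam : 'I_k -> R) : Prop :=
  v != 0 /\ forall j, A j *m v = lam j *: v.

Definition lyap_line (R : realType) (k : nat) (p : 'I_k -> R) (lam : 'I_k -> R) : R :=
  \sum_(j < k) p j * ln `|lam j|.

Definition quasi_irreducible (R : realType) (k : nat) (p : 'I_k -> R)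
    (A : 'I_k -> 'M[R]_2) : Prop :=
  ~ exists (v : 'cV[R]_2) (lam : 'I_k -> R),
      inv_line A v lam /\ lyap_line p lam < lyap p A.

Definition cocycle_diagonalizable (R : realType) (k : nat) (A : 'I_k -> 'M[R]_2) : Prop :=
  exists (v w : 'cV[R]_2) (lv lw : 'I_k -> R),
    inv_line A v lv /\ inv_line A w lw /\ forall c : R, w != c *: v.

Definition inv_cocycle (R : realType) (k : nat) (A : 'I_k -> 'M[R]_2) : 'I_k -> 'M[R]_2 :=
  fun j => invmx (A j).

(* Main.v *)
Require Import Defs.
From HB Require Import structures.
From mathcomp Require Import all_boot all_order all_algebra.
From mathcomp Require Import all_classical all_reals all_analysis.
From mathcomp Require Import ring lra.
From Stdlib Require Import Classical_Prop.
Import Order.TTheory GRing.Theory Num.Theory numFieldNormedType.Exports.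
Local Open Scope ring_scope.
Set Implicit Arguments. Unset Strict Implicit. Unset Printing Implicit Defensive.
Section Mx.
Variable R : realType.
Implicit Types (M : 'M[R]_2) (v : 'cV[R]_2).

Lemma sum2 (F : 'I_2 -> R) : \sum_(i < 2) F i = F 0 + F 1.
Proof. by rewrite big_ord_recr big_ord1; congr (F _ + F _); apply: val_inj. Qed.

Lemma mulmxE2 M v i : (M *m v) i 0 = M i 0 * v 0 0 + M i 1 * v 1 0.
Proof. by rewrite mxE sum2. Qed.

Lemma mulmx22 (M N : 'M[R]_2) i j : (M *m N) i j = M i 0 * N 0 j + M i 1 * N 1 j.
Proof. by rewrite mxE sum2. Qed.

Lemma det22 M : \det M = M 0 0 * M 1 1 - M 0 1 * M 1 0.
Proof.
rewrite (expand_det_row _ 0) sum2 /cofactor !det_mx11 !mxE /=.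
have -> : lift (0 : 'I_2) 0 = 1 by apply: val_inj.
have -> : lift (1 : 'I_2) 0 = 0 by apply: val_inj.
rewrite expr0 expr1; ring.
Qed.

End Mx.
Section Tri.
Variable R : realType.
Variable v : 'cV[R]_2.
Implicit Types (M : 'M[R]_2).
Local Notation x := (v 0 0).
Local Notation y := (v 1 0).
Definition nv := x ^+ 2 + y ^+ 2.
Definition mu0 M := - M 0 0 * y + M 0 1 * x.
Definition mu1 M := - M 1 0 * y + M 1 1 * x.
Definition gam M := x * mu0 M + y * mu1 M.
Definition bet M := - y * mu0 M + x * mu1 M.
Definition fsq M := \sum_(i < 2) \sum_(j < 2) M i j ^+ 2.

Lemma fsqE M : fsq M = M 0 0 ^+ 2 + M 0 1 ^+ 2 + M 1 0 ^+ 2 + M 1 1 ^+ 2.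
Proof. by rewrite /fsq !sum2 addrA. Qed.

Lemma eigE M l : M *m v = l *: v ->
  M 0 0 * x + M 0 1 * y = l * x /\ M 1 0 * x + M 1 1 * y = l * y.
Proof.
move=> H; split.
  by have := congr1 (fun X : 'cV_2 => X 0 0) H; rewrite mulmxE2 mxE.
by have := congr1 (fun X : 'cV_2 => X 1 0) H; rewrite mulmxE2 mxE.
Qed.

Lemma nv_gt0 : v != 0 -> 0 < nv.
Proof.
move=> hv; rewrite lt0r addr_ge0 ?sqr_ge0 // andbT /nv paddr_eq0 ?sqr_ge0 // !sqrf_eq0.
apply: contra hv => /andP[/eqP h0 /eqP h1]; apply/eqP/matrixP => i j; rewrite mxE (ord1 j).
case: i => [[|[|//]] hi].
  by have -> : Ordinal hi = 0 by apply: val_inj.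
by have -> : Ordinal hi = 1 by apply: val_inj.
Qed.

Lemma fsq_id M : fsq M * nv ^+ 2 =
  (x * (M 0 0 * x + M 0 1 * y) + y * (M 1 0 * x + M 1 1 * y)) ^+ 2 +
  (- y * (M 0 0 * x + M 0 1 * y) + x * (M 1 0 * x + M 1 1 * y)) ^+ 2 +
  gam M ^+ 2 + bet M ^+ 2.
Proof. rewrite fsqE /nv /gam /bet /mu0 /mu1; ring. Qed.

Lemma det_id M : \det M * nv =
  (M 0 0 * x + M 0 1 * y) * mu1 M - (M 1 0 * x + M 1 1 * y) * mu0 M.
Proof. rewrite det22 /nv /mu0 /mu1; ring. Qed.

Lemma gam_mul (M2 M1 : 'M[R]_2) : gam (M2 *m M1) * nv =
  gam M1 * (x * (M2 0 0 * x + M2 0 1 * y) + y * (M2 1 0 * x + M2 1 1 * y))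
  + bet M1 * gam M2.
Proof. rewrite /gam /bet /mu0 /mu1 /nv !mulmx22; ring. Qed.

End Tri.
Section Prod.
Variable R : realType.
Variable v : 'cV[R]_2.
Hypothesis hv : v != 0.
Local Notation x := (v 0 0).
Local Notation y := (v 1 0).
Local Notation nv := (nv v).
Local Notation gam := (gam v).
Local Notation bet := (bet v).

Lemma nvn0 : nv != 0. Proof. by rewrite gt_eqF // nv_gt0. Qed.

Lemma bet_eq M l d : M *m v = l *: v -> \det M = d -> d ^+ 2 = 1 ->
  l != 0 /\ bet M = d * nv / l.
Proof.
move=> /eigE [h0 h1] hd hd2.
have E : d * nv = l * bet M by rewrite -hd det_id h0 h1 /bet; ring.
have ln0 : l != 0.
  apply/eqP => l0; move: E; rewrite l0 mul0r => /eqP; rewrite mulf_eq0 (negPf nvn0) orbF => /eqP d0.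
  by move: hd2; rewrite d0 expr0n /= => /eqP; rewrite eq_sym oner_eq0.
by split => //; rewrite E; field.
Qed.

Lemma eig_frob M l d : M *m v = l *: v -> \det M = d -> d ^+ 2 = 1 ->
  l != 0 /\ fsq M = l ^+ 2 + l ^-2 + (gam M / nv) ^+ 2.
Proof.
move=> H hd hd2; have [ln0 hb] := bet_eq H hd hd2.
split => //.
have := fsq_id v M; move: (eigE H) => [h0 h1]; rewrite h0 h1 hb => E.
have hn := nvn0.
apply: (mulIf (expf_neq0 2 hn)); rewrite E.
have -> : (d * nv / l) ^+ 2 = nv ^+ 2 / l ^+ 2 by rewrite !exprMn hd2 mul1r exprVn.
rewrite /nv; field.
by apply/andP; split.
Qed.

Lemma gam_prod (M2 M1 : 'M[R]_2) l2 l1 d1 :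
  M2 *m v = l2 *: v -> M1 *m v = l1 *: v -> \det M1 = d1 -> d1 ^+ 2 = 1 ->
  gam (M2 *m M1) = l2 * gam M1 + d1 / l1 * gam M2.
Proof.
move=> H2 H1 hd hd2; have [ln0 hb] := bet_eq H1 hd hd2.
have := gam_mul v M2 M1; move: (eigE H2) => [h0 h1]; rewrite h0 h1 hb => E.
apply: (mulIf nvn0); rewrite E /nv; field; exact: ln0.
Qed.

End Prod.
Section Prod2.
Variable R : realType.
Variable v : 'cV[R]_2.
Hypothesis hv : v != 0.
Local Notation gam := (gam v).

Lemma gam1 : gam 1%:M = 0.
Proof. rewrite /gam /mu0 /mu1 !mxE /=; ring. Qed.

Lemma normd d : d ^+ 2 = 1 -> `|d| = 1 :> R.
Proof.
by move=> h; have := sqrf_eq1 d; rewrite h eqxx => /esym/orP [] /eqP ->; rewrite ?normrN normr1.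
Qed.

Lemma prod_props n (B : 'I_n -> 'M[R]_2) (l : 'I_n -> R) K :
  (forall i, B i *m v = l i *: v) -> (forall i, \det (B i) ^+ 2 = 1) ->
  (forall i, `|gam (B i)| <= K * `|l i|) -> 0 <= K ->
  [/\ (\prod_(i < n) B i) *m v = (\prod_(i < n) l i) *: v,
      \det (\prod_(i < n) B i) ^+ 2 = 1 &
      `|gam (\prod_(i < n) B i)| <= K * \sum_(m < n) \prod_(i < n)
          (if (i <= m)%N then `|l i| else `|l i|^-1)].
Proof.
elim: n B l => [|n IH] B l hB hd hg hK.
  rewrite !big_ord0 mul1mx scale1r det1 expr1n gam1 normr0 mulr0; split => //.
set B' := fun i => B (lift ord0 i); set l' := fun i => l (lift ord0 i).
have [IH1 IH2 IH3] := IH B' l' (fun i => hB _) (fun i => hd _) (fun i => hg _) hK.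
rewrite !big_ord_recl -/B' -/l'.
set Q := \prod_(i < n) B' i; set L := \prod_(i < n) l' i.
have -> : B ord0 * Q = B ord0 *m Q by rewrite mulmxE.
have [l0n0 _] := eig_frob hv (hB ord0) erefl (hd ord0).
have [Ln0 _] := eig_frob hv IH1 erefl IH2.
split.
- by rewrite -mulmxA IH1 -scalemxAr hB scalerA mulrC.
- by rewrite det_mulmx exprMn hd IH2 mulr1.
rewrite (gam_prod hv (hB ord0) IH1 erefl IH2).
apply: (le_trans (ler_normD _ _)).
rewrite !normrM normfV (normd IH2) mul1r.
have E0 : \prod_(i < n) (if (lift ord0 i <= (ord0 : 'I_n.+1))%N then `|l (lift ord0 i)|
       else `|l (lift ord0 i)|^-1) = `|L|^-1.
  by rewrite normr_prod -prodfV; apply: eq_bigr => i _.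
have E1 : forall m : 'I_n, \prod_(i0 < n.+1) (if (i0 <= lift ord0 m)%N then `|l i0|
     else `|l i0|^-1) = `|l ord0| * \prod_(i < n) (if (i <= m)%N then `|l' i| else `|l' i|^-1).
  by move=> m; rewrite big_ord_recl lift0 /=; congr (_ * _); apply: eq_bigr => i _; rewrite lift0 ltnS.
rewrite E0 (eq_bigr _ (fun m _ => E1 m)) /= -big_distrr /= mulrDr.
rewrite addrC; apply: lerD.
  rewrite mulrC mulrA.
  by apply: ler_wpM2r; [rewrite invr_ge0 normr_ge0 | exact: hg].
by rewrite mulrCA; apply: ler_wpM2l; [exact: normr_ge0 | exact: IH3].
Qed.


End Prod2.
Section Expect.
Variable R : realType.
Variable k : nat.
Variable p : 'I_k -> R.
Hypothesis hp0 : forall j, 0 < p j.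
Hypothesis hp1 : \sum_(j < k) p j = 1.

Lemma fact n (g : 'I_n -> 'I_k -> R) :
  \sum_(w : {ffun 'I_n -> 'I_k}) word_prob p w * \prod_(i < n) g i (w i) =
  \prod_(i < n) \sum_(c < k) p c * g i c.
Proof.
rewrite bigA_distr_bigA /=; apply: eq_bigr => w _; rewrite /word_prob -big_split //.
Qed.

Lemma wp_sum n : \sum_(w : {ffun 'I_n -> 'I_k}) word_prob p w = 1.
Proof.
have := fact (fun (_ : 'I_n) (_ : 'I_k) => 1).
under eq_bigr => w _ do rewrite big1 // mulr1.
move=> ->; apply: big1 => i _; under eq_bigr => c _ do rewrite mulr1; exact: hp1.
Qed.

Lemma wp_gt0 n (w : {ffun 'I_n -> 'I_k}) : 0 < word_prob p w.
Proof. by apply: prodr_gt0 => i _; exact: hp0. Qed.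

Lemma E_coord n (j : 'I_n) (f : 'I_k -> R) :
  \sum_(w : {ffun 'I_n -> 'I_k}) word_prob p w * f (w j) = \sum_(c < k) p c * f c.
Proof.
have := fact (fun i c => if i == j then f c else 1).
have -> : \prod_(i < n) (\sum_(c < k) p c * (if i == j then f c else 1)) = \sum_(c < k) p c * f c.
  rewrite (bigD1 j) //= eqxx [X in _ * X]big1 ?mulr1 // => i /negPf ->.
  by under eq_bigr => c _ do rewrite mulr1.
move=> <-; apply: eq_bigr => w _; congr (_ * _).
by rewrite (bigD1 j) //= eqxx [X in _ * X]big1 ?mulr1 // => i /negPf ->.
Qed.

Lemma ln_le_sub1 (x : R) : 0 < x -> ln x <= x - 1.
Proof.
move=> hx; have := @le_ln1Dx R (x - 1); rewrite addrCA subrr addr0; apply.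
by rewrite ltrBrDr addrC subrr.
Qed.

Lemma Epos n (Y : {ffun 'I_n -> 'I_k} -> R) : (forall w, 0 < Y w) ->
  0 < \sum_w word_prob p w * Y w.
Proof.
move=> hY.
have [j0 _ | h0] := pickP (@predT 'I_k); last first.
  by move: hp1; rewrite big_pred0 // => /eqP; rewrite eq_sym oner_eq0.
pose w0 : {ffun 'I_n -> 'I_k} := [ffun _ => j0].
rewrite (bigD1 w0) //=; apply: ltr_wpDr; last by rewrite mulr_gt0 ?wp_gt0 ?hY.
by apply: sumr_ge0 => w _; rewrite mulr_ge0 ?ltW ?wp_gt0 ?hY.
Qed.

Lemma jensen n (Y : {ffun 'I_n -> 'I_k} -> R) : (forall w, 0 < Y w) ->
  \sum_w word_prob p w * ln (Y w) <= ln (\sum_w word_prob p w * Y w).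
Proof.
move=> hY; set c := \sum_w word_prob p w * Y w.
have [j0 _ | h0] := pickP (@predT 'I_k); last first.
  by move: hp1; rewrite big_pred0 // => /eqP; rewrite eq_sym oner_eq0.
have hc : 0 < c.
  pose w0 : {ffun 'I_n -> 'I_k} := [ffun _ => j0].
  rewrite /c (bigD1 w0) //=; apply: ltr_wpDr; last by rewrite mulr_gt0 ?wp_gt0 ?hY.
  by apply: sumr_ge0 => w _; rewrite mulr_ge0 ?ltW ?wp_gt0 ?hY.
have H w : ln (Y w) <= ln c + (Y w / c - 1).
  have := ln_le_sub1 (divr_gt0 (hY w) hc); rewrite ln_div ?posrE ?hY //.
  by rewrite lerBlDl.
apply: (le_trans (y := \sum_w word_prob p w * (ln c + (Y w / c - 1)))).
  by apply: ler_sum => w _; apply: ler_wpM2l; [rewrite ltW ?wp_gt0 | exact: H].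
under eq_bigr => w _ do rewrite mulrDr mulrBr mulr1 mulrA.
rewrite big_split /= sumrB -big_distrl -mulr_suml /= wp_sum -/c mulfV ?gt_eqF //.
by rewrite mul1r subrr addr0.
Qed.

End Expect.
Lemma ln_prod (R : realType) (I : Type) (r : seq I) (f : I -> R) :
  (forall i, 0 < f i) -> ln (\prod_(i <- r) f i) = \sum_(i <- r) ln (f i).
Proof.
move=> hf; have -> : \prod_(i <- r) f i = expR (\sum_(i <- r) ln (f i)).
  by rewrite expR_sum; apply: eq_bigr => i _; rewrite lnK // posrE.
by rewrite expRK.
Qed.

Section Word.
Variable R : realType.
Variable k : nat.
Variable p : 'I_k -> R.
Hypothesis hp0 : forall j, 0 < p j.
Hypothesis hp1 : \sum_(j < k) p j = 1.
Variable A : 'I_k -> 'M[R]_2.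
Variable v : 'cV[R]_2.
Hypothesis hv : v != 0.
Variable lam : 'I_k -> R.
Hypothesis hAv : forall j, A j *m v = lam j *: v.
Hypothesis hd : forall j, \det (A j) ^+ 2 = 1.

Lemma lam_n0 j : lam j != 0.
Proof. by have [] := eig_frob hv (hAv j) erefl (hd j). Qed.

Lemma lam_gt0 j : 0 < `|lam j|.
Proof. by rewrite normr_gt0 lam_n0. Qed.

Definition KK := \sum_(j < k) `|gam v (A j)| / `|lam j|.

Lemma KK_ge0 : 0 <= KK.
Proof. by apply: sumr_ge0 => j _; rewrite divr_ge0. Qed.

Lemma KK_bound j : `|gam v (A j)| <= KK * `|lam j|.
Proof.
rewrite -ler_pdivrMr ?lam_gt0 // /KK (bigD1 j) //= lerDl.
by apply: sumr_ge0 => i _; rewrite divr_ge0.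
Qed.

Definition XX n (w : {ffun 'I_n -> 'I_k}) (i : 'I_n) := ln `|lam (w (rev_ord i))|.

Lemma word_props n (w : {ffun 'I_n -> 'I_k}) :
  let l := fun i => lam (w (rev_ord i)) in
  [/\ iterate A w *m v = (\prod_(i < n) l i) *: v,
      \det (iterate A w) ^+ 2 = 1 &
      `|gam v (iterate A w)| <= KK * \sum_(m < n) \prod_(i < n)
          (if (i <= m)%N then `|l i| else `|l i|^-1)].
Proof.
move=> l; apply: (prod_props hv (B := fun i => A (w (rev_ord i))) (l := l)) => //.
- by move=> i; apply: KK_bound.
- exact: KK_ge0.
Qed.

Lemma frob_fsq (M : 'M[R]_2) : frob_norm M = Num.sqrt (fsq M).
Proof. by []. Qed.

Lemma lnF_lower n (w : {ffun 'I_n -> 'I_k}) :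
  `| \sum_(i < n) XX w i | <= ln (frob_norm (iterate A w)).
Proof.
have [H1 H2 _] := word_props w.
have [L0 F] := eig_frob hv H1 erefl H2.
set L := \prod_(i < n) _ in L0 F.
have hL : 0 < `|L| by rewrite normr_gt0.
have hS : \sum_(i < n) XX w i = ln `|L|.
  by rewrite /L normr_prod ln_prod // => i; exact: lam_gt0.
have hF : 0 < frob_norm (iterate A w).
  rewrite frob_fsq sqrtr_gt0 F; apply: ltr_wpDr; first exact: sqr_ge0.
  by apply: ltr_wpDr; [rewrite invr_ge0 sqr_ge0 | rewrite lt0r sqr_ge0 andbT sqrf_eq0].
rewrite hS ler_norml; apply/andP; split.
  rewrite lerNl -lnV ?posrE // ler_ln ?posrE ?invr_gt0 // frob_fsq F.
  have e : `|L|^-1 = Num.sqrt ((`|L|^-1) ^+ 2).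
    by rewrite sqrtr_sqr normfV normr_id.
  rewrite [X in X <= _]e ler_sqrt; last first.
    by rewrite addr_ge0 ?sqr_ge0 // addr_ge0 ?sqr_ge0 // invr_ge0 sqr_ge0.
  rewrite exprVn real_normK ?num_real //; apply: ler_wpDr; first exact: sqr_ge0.
  by apply: ler_wpDl; [exact: sqr_ge0 | exact: lexx].
rewrite ler_ln ?posrE // frob_fsq F.
rewrite -sqrtr_sqr ler_sqrt; last first.
  by rewrite addr_ge0 ?sqr_ge0 // addr_ge0 ?sqr_ge0 // invr_ge0 sqr_ge0.
rewrite -addrA; apply: ler_wpDr; last exact: lexx.
by rewrite addr_ge0 ?sqr_ge0 // invr_ge0 sqr_ge0.
Qed.


Definition Sg n (w : {ffun 'I_n -> 'I_k}) (m : nat) :=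
  \sum_(i < n) (if (i < m)%N then XX w i else - XX w i).
Definition YY n (s : R) (w : {ffun 'I_n -> 'I_k}) :=
  \sum_(m < n.+1) expR (s * Sg w m).

Lemma sq3 (a b c : R) : 0 <= a -> 0 <= b -> 0 <= c ->
  a ^+ 2 + b ^+ 2 + c ^+ 2 <= (a + b + c) ^+ 2.
Proof. move=> ha hb hc; nra. Qed.

Lemma YY_gt0 n s (w : {ffun 'I_n -> 'I_k}) : 0 < YY s w.
Proof.
rewrite /YY big_ord_recl; apply: ltr_wpDr; last exact: expR_gt0.
by apply: sumr_ge0 => m _; exact: expR_ge0.
Qed.

Lemma lnF_upper n (w : {ffun 'I_n -> 'I_k}) s : 0 < s ->
  ln (frob_norm (iterate A w)) <=
    ln (2 + KK / nv v) + ln n.+1%:R + ln (YY s w) / s.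
Proof.
move=> hs.
have [H1 H2 H3] := word_props w.
have [L0 F] := eig_frob hv H1 erefl H2.
set L := \prod_(i < n) _ in L0 F H1.
have hnv := nv_gt0 hv.
have ym_eq m : expR (Sg w m) =
    \prod_(i < n) (if (i < m)%N then `|lam (w (rev_ord i))| else `|lam (w (rev_ord i))|^-1).
  rewrite expR_sum; apply: eq_bigr => i _; rewrite /XX.
  by case: ifP => _; rewrite ?expRN lnK // posrE lam_gt0.
have yn : `|L| = expR (Sg w n).
  by rewrite ym_eq /L normr_prod; apply: eq_bigr => i _; rewrite ltn_ord.
have y0 : `|L|^-1 = expR (Sg w 0).
  by rewrite ym_eq /L normr_prod -prodfV.
have hz : \sum_(m < n) \prod_(i < n) (if (i <= m)%N then `|lam (w (rev_ord i))|
     else `|lam (w (rev_ord i))|^-1) = \sum_(m < n) expR (Sg w m.+1).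
  by apply: eq_bigr => m _; rewrite ym_eq.
rewrite hz in H3.
set S := \sum_(m < n.+1) expR (Sg w m).
have hS0 : \sum_(m < n) expR (Sg w m.+1) <= S.
  rewrite /S big_ord_recl; apply: ler_wpDl; first exact: expR_ge0.
  by apply: ler_sum => m _; rewrite lift0.
have hSn : expR (Sg w n) <= S.
  rewrite /S (bigD1 ord_max) //=; apply: ler_wpDr; last exact: lexx.
  by apply: sumr_ge0 => m _; exact: expR_ge0.
have hS1 : expR (Sg w 0) <= S.
  rewrite /S big_ord_recl; apply: ler_wpDr; last exact: lexx.
  by apply: sumr_ge0 => m _; exact: expR_ge0.
have hKn : 0 <= KK / nv v by rewrite divr_ge0 ?KK_ge0 ?ltW.
have hT : frob_norm (iterate A w) <= (2 + KK / nv v) * S.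
  apply: (le_trans (y := `|L| + `|L|^-1 + `|gam v (iterate A w)| / nv v)).
    rewrite frob_fsq F.
    have e : `|L| + `|L|^-1 + `|gam v (iterate A w)| / nv v =
      Num.sqrt ((`|L| + `|L|^-1 + `|gam v (iterate A w)| / nv v) ^+ 2).
      have hc : 0 <= `|gam v (iterate A w)| / nv v by rewrite divr_ge0 // ltW.
      have hb : 0 <= `|L|^-1 by rewrite invr_ge0.
      by rewrite sqrtr_sqr [X in _ = X]ger0_norm // !addr_ge0.
    rewrite [X in _ <= X]e ler_sqrt ?sqr_ge0 //.
    have := sq3 (normr_ge0 L) (normr_ge0 L^-1) (normr_ge0 (gam v (iterate A w) / nv v)).
    by rewrite !real_normK ?num_real // exprVn normfV normrM normfV (gtr0_norm hnv).
  have -> : (2 + KK / nv v) * S = S + S + KK / nv v * S by ring.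
  apply: lerD; first by apply: lerD; [rewrite yn | rewrite y0].
  rewrite mulrAC ler_pM2r ?invr_gt0 //.
  apply: (le_trans H3); apply: ler_wpM2l; [exact: KK_ge0 | exact: hS0].
have hY m : expR (Sg w m) <= expR (ln (YY s w) / s).
  rewrite ler_expR ler_pdivlMr // mulrC -[X in X <= _]expRK ler_ln ?posrE ?expR_gt0 ?YY_gt0 //.
  case: (ltnP m n.+1) => hm.
    rewrite /YY (bigD1 (Ordinal hm)) //=; apply: ler_wpDr; last exact: lexx.
    by apply: sumr_ge0 => i _; exact: expR_ge0.
  have -> : Sg w m = Sg w n.
    by apply: eq_bigr => i _; rewrite ltn_ord (leq_trans (ltn_ord i) (ltnW hm)).
  rewrite /YY (bigD1 ord_max) //=; apply: ler_wpDr; last exact: lexx.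
  by apply: sumr_ge0 => i _; exact: expR_ge0.
have hS : S <= n.+1%:R * expR (ln (YY s w) / s).
  apply: (le_trans (y := \sum_(m < n.+1) expR (ln (YY s w) / s))).
    by apply: ler_sum => m _; exact: hY.
  by rewrite sumr_const card_ord mulr_natl.
have hF : 0 < frob_norm (iterate A w).
  rewrite frob_fsq sqrtr_gt0 F; apply: ltr_wpDr; first exact: sqr_ge0.
  by apply: ltr_wpDr; [rewrite invr_ge0 sqr_ge0 | rewrite lt0r sqr_ge0 andbT sqrf_eq0].
have h2 : 0 < 2 + KK / nv v by apply: ltr_wpDr.
rewrite -[ln (YY s w) / s]expRK -!lnM ?posrE ?expR_gt0 ?ltr0n ?mulr_gt0 ?ltr0n ?expR_gt0 //.
rewrite ler_ln ?posrE ?mulr_gt0 ?ltr0n ?expR_gt0 //.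
apply: (le_trans hT); rewrite -mulrA; apply: ler_wpM2l; first exact: ltW.
exact: hS.
Qed.
Lemma expR_le2 (u : R) : u <= 1 / 2 -> expR u <= 1 + u + 2 * u ^+ 2.
Proof.
move=> hu; have hu1 : 0 < 1 - u by rewrite subr_gt0; apply: (le_lt_trans hu); lra.
rewrite -(ler_pM2r hu1); apply: (le_trans (y := 1)).
  have h := expR_ge1Dx (- u); have e := expRxMexpNx_1 u.
  apply: (le_trans (y := expR u * expR (- u))); last by rewrite e.
  by rewrite ler_wpM2l ?expR_ge0.
nra.
Qed.

Definition aa := \sum_(c < k) p c * ln `|lam c|.
Definition VV := \sum_(c < k) p c * (ln `|lam c|) ^+ 2.
Definition MM := \sum_(c < k) `|ln `|lam c| |.

Lemma VV_ge0 : 0 <= VV.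
Proof. by apply: sumr_ge0 => c _; rewrite mulr_ge0 ?sqr_ge0 ?ltW. Qed.

Lemma MM_ge c : `|ln `|lam c| | <= MM.
Proof.
rewrite /MM (bigD1 c) //= lerDl; by apply: sumr_ge0 => i _.
Qed.

Lemma phi_bound t : `|t| * MM <= 1 / 2 ->
  \sum_(c < k) p c * expR (t * ln `|lam c|) <= 1 + t * aa + 2 * t ^+ 2 * VV.
Proof.
move=> ht.
apply: (le_trans (y := \sum_(c < k) p c * (1 + t * ln `|lam c| + 2 * (t * ln `|lam c|) ^+ 2))).
  apply: ler_sum => c _; apply: ler_wpM2l; first exact: ltW.
  apply: expR_le2.
  apply: (le_trans (ler_norm _)); rewrite normrM; apply: (le_trans _ ht).
  by rewrite ler_wpM2l // MM_ge.
rewrite le_eqVlt; apply/orP; left; apply/eqP.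
have -> : \sum_(c < k) p c * (1 + t * ln `|lam c| + 2 * (t * ln `|lam c|) ^+ 2) =
  \sum_(c < k) (p c + t * (p c * ln `|lam c|) + 2 * t ^+ 2 * (p c * ln `|lam c| ^+ 2)).
  by apply: eq_bigr => c _; ring.
by rewrite !big_split /= -!mulr_sumr hp1.
Qed.

Definition rho s := expR (s * `|aa| + 2 * s ^+ 2 * VV).

Lemma phi_rho s (b : bool) : 0 < s -> s * MM <= 1 / 2 ->
  \sum_(c < k) p c * expR (s * (if b then ln `|lam c| else - ln `|lam c|)) <= rho s.
Proof.
move=> hs hM.
have E : forall t, `|t| = s -> \sum_(c < k) p c * expR (t * ln `|lam c|) <= rho s.
  move=> t ht; have hb : `|t| * MM <= 1 / 2 by rewrite ht.
  apply: (le_trans (phi_bound hb)).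
  apply: (le_trans _ (expR_ge1Dx _)); rewrite addrA; apply: lerD.
    by rewrite lerD2l -ht -normrM; exact: ler_norm.
  by rewrite -ht real_normK ?num_real.
case: b.
  by apply: E; rewrite gtr0_norm.
under eq_bigr => c _ do rewrite mulrN -mulNr.
by apply: E; rewrite normrN gtr0_norm.
Qed.
Lemma E_term n s m : 0 < s -> s * MM <= 1 / 2 ->
  \sum_(w : {ffun 'I_n -> 'I_k}) word_prob p w * expR (s * Sg w m) <= rho s ^+ n.
Proof.
move=> hs hM.
pose g := fun (j : 'I_n) (c : 'I_k) =>
  expR (s * (if (rev_ord j < m)%N then ln `|lam c| else - ln `|lam c|)).
have -> : \sum_(w : {ffun 'I_n -> 'I_k}) word_prob p w * expR (s * Sg w m) =
    \sum_(w : {ffun 'I_n -> 'I_k}) word_prob p w * \prod_(i < n) g i (w i).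
  apply: eq_bigr => w _; congr (_ * _).
  rewrite /Sg mulr_sumr expR_sum (reindex_inj rev_ord_inj) /=.
  by apply: eq_bigr => i _; rewrite /XX /g rev_ordK.
rewrite fact.
apply: (le_trans (y := \prod_(i < n) rho s)); last by rewrite prodr_const card_ord.
apply: ler_prod => i _; apply/andP; split.
  by apply: sumr_ge0 => c _; rewrite mulr_ge0 ?expR_ge0 ?ltW.
exact: phi_rho.
Qed.

Lemma e_lower n : n%:R * `|aa| <= exp_log_norm p A n.
Proof.
have hE : \sum_(w : {ffun 'I_n -> 'I_k}) word_prob p w * \sum_(i < n) XX w i = n%:R * aa.
  under eq_bigr => w _ do rewrite mulr_sumr.
  rewrite exchange_big /=.
  under eq_bigr => i _ do rewrite (E_coord hp1 (rev_ord i) (fun c => ln `|lam c|)).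
  by rewrite sumr_const card_ord mulr_natl.
rewrite -[n%:R]normr_nat -normrM -hE /exp_log_norm.
apply: (le_trans (ler_norm_sum _ _ _)); apply: ler_sum => w _.
rewrite normrM (ger0_norm (ltW (wp_gt0 hp0 w))); apply: ler_wpM2l.
  exact: ltW (wp_gt0 hp0 w).
exact: lnF_lower.
Qed.

Lemma e_upper n s : 0 < s -> s * MM <= 1 / 2 ->
  exp_log_norm p A n <= ln (2 + KK / nv v) + ln n.+1%:R +
     (ln n.+1%:R + n%:R * (s * `|aa| + 2 * s ^+ 2 * VV)) / s.
Proof.
move=> hs hM; rewrite /exp_log_norm.
apply: (le_trans (y := \sum_(w : {ffun 'I_n -> 'I_k}) word_prob p w *
   (ln (2 + KK / nv v) + ln n.+1%:R + ln (YY s w) / s))).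
  apply: ler_sum => w _; apply: ler_wpM2l; first exact: ltW (wp_gt0 hp0 w).
  exact: lnF_upper.
under eq_bigr => w _ do rewrite !mulrDr mulrA.
rewrite !big_split /= -!mulr_suml (wp_sum hp1) !mul1r lerD2l ler_pM2r ?invr_gt0 //.
apply: (le_trans (jensen hp0 hp1 (@YY_gt0 n s))).
have hr : 0 < rho s by exact: expR_gt0.
have -> : ln n.+1%:R + n%:R * (s * `|aa| + 2 * s ^+ 2 * VV) = ln (n.+1%:R * rho s ^+ n).
  by rewrite /rho -expRM_natl lnM ?posrE ?ltr0n ?expR_gt0 // expRK.
rewrite ler_ln ?posrE ?mulr_gt0 ?ltr0n ?exprn_gt0 //; last first.
  by apply: (Epos hp0 hp1) => w; exact: YY_gt0.
apply: (le_trans (y := \sum_(m < n.+1) rho s ^+ n)); last first.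
  by rewrite sumr_const card_ord mulr_natl.
under eq_bigr => w _ do rewrite /YY mulr_sumr.
rewrite exchange_big /=; apply: ler_sum => m _; exact: E_term.
Qed.
Lemma aux4 (a x : R) : a != 0 -> x = a / 4 * (4 * x / a).
Proof. by move=> ha; field. Qed.

Lemma aux_up (C L N a s V : R) : s != 0 ->
  C + L + (L + N * (s * a + 2 * s ^+ 2 * V)) / s =
  C + (1 + s^-1) * L + N * a + N * (2 * s * V).
Proof. by move=> hs; field. Qed.

Lemma lyap_eq : lyap p A = `|aa|.
Proof.
rewrite /lyap; apply: (cvg_lim (@Rhausdorff R)).
apply/cvgrPdist_le => eps heps.
have hM0 : 0 <= MM by apply: sumr_ge0.
have hV0 := VV_ge0.
set s := Num.min (2 * (MM + 1))^-1 (eps / (4 * (VV + 1))).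
have hs : 0 < s by rewrite lt_min invr_gt0 divr_gt0 ?mulr_gt0 ?ltr_wpDl //=; lra.
have hs1 : s * (2 * (MM + 1)) <= 1.
  rewrite -ler_pdivlMr; last lra.
  by rewrite div1r /s ge_min lexx.
have hs2 : s * (4 * (VV + 1)) <= eps.
  rewrite -ler_pdivlMr; last lra.
  by rewrite /s ge_min lexx orbT.
have hsM : s * MM <= 1 / 2 by nra.
have hsV : 2 * s * VV <= eps / 2 by nra.
set C := ln (2 + KK / nv v).
set D := 1 + s^-1.
have hD : 0 < D by rewrite /D ltr_wpDr ?invr_ge0 ?ltW.
set de := eps / (8 * D).
have hde : 0 < de by rewrite divr_gt0 // mulr_gt0.
have hDde : D * de = eps / 8 by rewrite /de; field; rewrite gt_eqF.
near=> n.
have hr : 4 * (C - D * ln de) / eps <= n%:R.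
  near: n; exact: nbhs_infty_ger.
have lo := e_lower n.+1.
have up := e_upper n.+1 hs hsM.
set e := exp_log_norm p A n.+1 in lo up *.
set N1 : R := n.+1%:R in lo up *.
have hN1 : 0 < N1 by rewrite /N1 ltr0n.
set Lg := ln n.+2%:R in up.
have hLg : Lg <= de * n.+2%:R - ln de.
  have := ln_sublinear (mulr_gt0 hde (ltr0n R n.+2 : 0 < n.+2%:R)).
  rewrite lnM ?posrE ?ltr0n // => h; rewrite /Lg; lra.
have hDL : D * Lg <= eps / 8 * n.+2%:R - D * ln de.
  rewrite -hDde -mulrA -mulrBr; apply: ler_wpM2l; [exact: ltW | exact: hLg].
have hn2 : n.+2%:R = N1 + 1 by rewrite /N1 -addn1 natrD.
have hr' : C - D * ln de <= eps / 4 * N1.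
  have -> : C - D * ln de = eps / 4 * (4 * (C - D * ln de) / eps).
    by apply: aux4; rewrite gt_eqF.
  apply: ler_wpM2l; first lra.
  by apply: (le_trans hr); rewrite /N1 ler_nat.
have hup : e <= C + D * Lg + N1 * `|aa| + N1 * (2 * s * VV).
  by move: up; rewrite aux_up // gt_eqF.
have hsVN : N1 * (2 * s * VV) <= N1 * (eps / 2) by apply: ler_wpM2l; [exact: ltW | exact: hsV].
rewrite distrC ger0_norm; last first.
  by rewrite subr_ge0 ler_pdivlMr // mulrC.
rewrite lerBlDl ler_pdivrMr //.
have h1 : 1 <= N1 by rewrite /N1 ler1n.
nra.
Unshelve. all: end_near.
Qed.
End Word.
Lemma scale_inj (R : realType) (a b : R) (v : 'cV[R]_2) : v != 0 -> a *: v = b *: v -> a = b.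
Proof.
move=> hv e; apply/eqP; rewrite -subr_eq0; apply/eqP.
have : (a - b) *: v = 0 by rewrite scalerBl e subrr.
by move/eqP; rewrite scaler_eq0 (negPf hv) orbF => /eqP.
Qed.

Unset Implicit Arguments.
Set Strict Implicit.

Theorem lemma2p5 (R : realType) (k : nat) (p : 'I_k -> R) (A : 'I_k -> 'M[R]_2)
  (hp : pos_prob_vec p) (hA : forall j, SL2pm (A j)) :
  cocycle_diagonalizable A \/ quasi_irreducible p A \/ quasi_irreducible p (inv_cocycle A).
Proof.
move: hp => [hp0 hp1].
have hd : forall j, \det (A j) ^+ 2 = 1.
  by move=> j; case: (hA j) => ->; rewrite ?sqrrN expr1n.
have core : forall (B : 'I_k -> 'M[R]_2) w l, (forall j, \det (B j) ^+ 2 = 1) ->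
    inv_line B w l -> lyap p B = `|lyap_line p l|.
  by move=> B w l hdB [hw hBw]; rewrite (lyap_eq hp0 hp1 hw hBw hdB).
case: (classic (quasi_irreducible p A)) => hq; first by right; left.
case: (classic (cocycle_diagonalizable A)) => hdiag; first by left.
right; right.
have [v [lam [[hv hAv] hlt]]] := NNPP _ hq.
rewrite (core A v lam hd (conj hv hAv)) in hlt.
move=> [v' [lam' [[hv' hAv'] hlt']]].
have hdi : forall j, \det (inv_cocycle A j) ^+ 2 = 1.
  by move=> j; rewrite /inv_cocycle det_inv exprVn hd invr1.
rewrite (core _ v' lam' hdi (conj hv' hAv')) in hlt'.
have hunit j : A j \in unitmx.
  rewrite unitmxE unitfE; apply/eqP => h; have := hd j; rewrite h expr0n /= => /eqP.
  by rewrite eq_sym oner_eq0.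
have hl'0 j : lam' j != 0.
  apply/eqP => h; move: hv'; have := hAv' j; rewrite h scale0r /inv_cocycle => e.
  have : v' = A j *m (invmx (A j) *m v') by rewrite mulmxA mulmxV ?mul1mx.
  by rewrite e mulmx0 => ->; rewrite eqxx.
have hAv2 j : A j *m v' = (lam' j)^-1 *: v'.
  have e : v' = A j *m (invmx (A j) *m v') by rewrite mulmxA mulmxV ?mul1mx.
  have := hAv' j; rewrite /inv_cocycle => e2.
  rewrite {2}e e2 -scalemxAr scalerA mulVf ?scale1r //.
have [c hc] : exists c, v' = c *: v.
  apply: NNPP => H; apply: hdiag.
  exists v, v', lam, (fun j => (lam' j)^-1); split; first by split.
  split; first by split.
  by move=> c; apply/eqP => e; apply: H; exists c.
have hc0 : c != 0 by apply: contraNneq hv' => e; rewrite hc e scale0r.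
have hlam j : lam' j = (lam j)^-1.
  have := hAv2 j; rewrite hc -scalemxAr hAv scalerA [in RHS]scalerA => /(scale_inj hv) e.
  have : lam j = (lam' j)^-1 by apply: (mulfI hc0); rewrite e mulrC.
  by move=> ->; rewrite invrK.
have hl0 j : lam j != 0 by rewrite -invr_eq0 -hlam hl'0.
have hll : lyap_line p lam' = - lyap_line p lam.
  rewrite /lyap_line -sumrN; apply: eq_bigr => j _.
  by rewrite hlam normfV lnV ?posrE ?normr_gt0 // mulrN.
rewrite hll normrN in hlt'.
set a := lyap_line p lam in hlt hlt'.
case: (lerP 0 a) => h.
  by move: hlt; rewrite ger0_norm // ltxx.
by move: hlt'; rewrite ltr0_norm // ltxx.
Qed.
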